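(* The monoid $\mathcal{BR}(\mathfrak{S}_n)$ is presented by generators $e_1,\ldots,e_{n-1}$ and $z_1,\ldots,z_{n-1}$ subject to the relations: $e_i^2=e_i$ and $e_ie_j=e_je_i$ for all $i,j$; $z_iz_jz_i=z_jz_iz_j$ for $|i-j|=1$; $z_iz_j=z_jz_i$ for $|i-j|>1$; $e_iz_j=z_je_i$ for all $i,j$; $z_i^2=e_i$; $e_iz_i=z_i$.
   Context: $\mathfrak{C}_n$ is the partition monoid: set partitions of $[2n]$ (top points $1,\dots,n$, bottom points $n+1,\dots,2n$) with concatenation product $I*J$ (identify bottom point $n+i$ of $I$ with top point $i$ of $J$, join blocks transitively, delete the middle points). $I\preceq J$ means each block of $J$ is a union of blocks of $I$. $\mathfrak{S}_n\subseteq\mathfrak{C}_n$ consists of the partitions with all blocks of the form $\{i,n+j\}$; $s_i$ is the simple transposition; $1=\{\{i,n+i\}\}$. A set partition $J$ of $[2n]$ is boxed if $1\preceq J$ and the restriction of $J$ to $[n]$ is linear (all blocks intervals). $\mathcal{BR}(\mathfrak{S}_n)$ is the set of pairs $(I,J)$ with $I\in\mathfrak{S}_n$, $J$ boxed, $I\preceq J$, with product $(I,J)(H,K)=(I*H,J*K)$. Let $b_i$ be obtained from $1$ by merging the blocks $\{i,n+i\}$ and $\{i+1,n+i+1\}$; $e_i=(1,b_i)$ and $z_i=(s_i,b_i)$. *)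

(* Defs.v *)
From mathcomp Require Import all_boot.
Set Implicit Arguments. Unset Strict Implicit. Unset Printing Implicit Defensive.

(* Points of [2n], 0-based: top points 0..n-1 (paper: 1..n),
   bottom points n..2n-1 (paper: n+1..2n).
   A set partition of [2n] is encoded by its equivalence relation
   ("x and y lie in the same block"), stored as a finite function so that
   equality of partitions is Leibniz equality. *)
Definition spart (n : nat) := {ffun 'I_(n + n) * 'I_(n + n) -> bool}.

Definition is_setpart n (P : spart n) : bool :=
  [&& [forall x, P (x, x)],
      [forall x, forall y, P (x, y) ==> P (y, x)] &
      [forall x, forall y, forall z, P (x, y) ==> P (y, z) ==> P (x, z)]].

Definition rel_nat n (P : spart n) (a b : nat) : bool :=
  match (insub a : option 'I_(n + n)), (insub b : option 'I_(n + n)) with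
  | Some x, Some y => P (x, y)
  | _, _ => false
  end.

(* Concatenation I * J: points of I are 0..2n-1, points of J are shifted by n
   (so bottom point n+i of I is identified with top point i of J, both being
   n+i); blocks are joined transitively (connect), and the middle points
   n..2n-1 are deleted: top point i of the result is i, bottom point n+i of
   the result is 2n+i. *)
Definition cat_edge n (I J : spart n) : rel 'I_(n + n + n) :=
  fun a b => rel_nat I a b || [&& n <= a, n <= b & rel_nat J (a - n) (b - n)].

Definition out_pt n (x : nat) : nat := if x < n then x else x + n.

Definition pmul n (I J : spart n) : spart n :=
  [ffun p => [exists a : 'I_(n + n + n), exists b : 'I_(n + n + n),
      [&& val a == out_pt n (val p.1), val b == out_pt n (val p.2)
        & connect (cat_edge I J) a b]]].

Definition preceq n (I J : spart n) : bool := [forall p, I p ==> J p].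

Definition pone n : spart n :=
  [ffun p => (val p.1 %% n == val p.2 %% n)].

(* membership in S_n: every block is of the form {i, n+j} with i, j in [n],
   i.e. each block contains exactly one top and exactly one bottom point *)
Definition is_permpart n (I : spart n) : bool :=
  [forall x, (#|[set y | I (x, y) && (val y < n)]| == 1)
          && (#|[set y | I (x, y) && (n <= val y)]| == 1)].

(* boxed: 1 ≼ J and restriction of J to the top points is linear
   (all blocks of the restriction are intervals) *)
Definition boxed n (J : spart n) : bool :=
  preceq (pone n) J &&
  [forall x, forall y, forall z,
     [&& val x < val z, val z < val y, val y < n & J (x, y)] ==> J (x, z)].

Definition BR n := (spart n * spart n)%type.

Definition in_BR n (x : BR n) : bool :=
  [&& is_setpart x.1, is_setpart x.2, is_permpart x.1, boxed x.2
    & preceq x.1 x.2].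

Definition brmul n (x y : BR n) : BR n := (pmul x.1 y.1, pmul x.2 y.2).
Definition brone n : BR n := (pone n, pone n).

(* generators, indexed 0-based by i : 'I_(n-1) (paper index i+1) *)
(* s_i : transposition swapping top points i, i+1 (blocks {i,n+i+1},
   {i+1,n+i}, and {k,n+k} otherwise) *)
Definition swp (i k : nat) : nat := if k == i then i.+1 else if k == i.+1 then i else k.
Definition ps n (i : nat) : spart n :=
  [ffun p => let x := val p.1 in let y := val p.2 in
     if (x < n) == (y < n) then x == y
     else if x < n then y - n == swp i x else x - n == swp i y].

(* b_i : 1 with blocks {i,n+i} and {i+1,n+i+1} merged *)
Definition pb n (i : nat) : spart n :=
  [ffun p => (val p.1 %% n == val p.2 %% n)
     || ((val p.1 %% n \in [:: i; i.+1]) && (val p.2 %% n \in [:: i; i.+1]))].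

Inductive gen (n : nat) : Type :=
| ge of 'I_n.-1
| gz of 'I_n.-1.

Definition gen_el n (g : gen n) : BR n :=
  match g with
  | ge i => (pone n, pb n i)
  | gz i => (ps n i, pb n i)
  end.

Fixpoint eval n (w : seq (gen n)) : BR n :=
  match w with
  | [::] => brone n
  | g :: w' => brmul (gen_el g) (eval w')
  end.

Inductive brrel (n : nat) : seq (gen n) -> seq (gen n) -> Prop :=
| r_ee (i : 'I_n.-1) : brrel [:: ge i; ge i] [:: ge i]
| r_ecomm (i j : 'I_n.-1) : brrel [:: ge i; ge j] [:: ge j; ge i]
| r_braid (i j : 'I_n.-1) : (val i).+1 = val j \/ (val j).+1 = val i ->
    brrel [:: gz i; gz j; gz i] [:: gz j; gz i; gz j]
| r_zcomm (i j : 'I_n.-1) : (val i).+1 < val j \/ (val j).+1 < val i ->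
    brrel [:: gz i; gz j] [:: gz j; gz i]
| r_ez (i j : 'I_n.-1) : brrel [:: ge i; gz j] [:: gz j; ge i]
| r_zz (i : 'I_n.-1) : brrel [:: gz i; gz i] [:: ge i]
| r_ezi (i : 'I_n.-1) : brrel [:: ge i; gz i] [:: gz i].

Inductive brcong (n : nat) : seq (gen n) -> seq (gen n) -> Prop :=
| c_base u v : brrel u v -> brcong u v
| c_refl u : brcong u u
| c_sym u v : brcong u v -> brcong v u
| c_trans u v w : brcong u v -> brcong v w -> brcong u w
| c_ctx a b u v : brcong u v -> brcong (a ++ u ++ b) (a ++ v ++ b).

(* Main.v *)
Require Import Defs.
From mathcomp Require Import all_boot zify.
Set Implicit Arguments. Unset Strict Implicit. Unset Printing Implicit Defensive.

Definition act (u : seq nat) (x : nat) := foldl (fun x i => swp i x) x u.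

Lemma swpP i x : (x = i /\ swp i x = i.+1) \/ (x = i.+1 /\ swp i x = i) \/
   (x <> i /\ x <> i.+1 /\ swp i x = x).
Proof. rewrite /swp; case: eqP => [->|h1]; first by left. 
case: eqP => [->|h2]; [by right; left| by right; right]. Qed.

Lemma swpK i x : swp i (swp i x) = x.
Proof. have := swpP i x; have := swpP i (swp i x); lia. Qed.

Lemma swp_braid i x : swp i (swp i.+1 (swp i x)) = swp i.+1 (swp i (swp i.+1 x)).
Proof. have := swpP i x; have := swpP i.+1 (swp i x); have := swpP i (swp i.+1 (swp i x)).
have := swpP i.+1 x; have := swpP i (swp i.+1 x); have := swpP i.+1 (swp i (swp i.+1 x)). lia. Qed.

Lemma swp_comm i j x : i.+1 < j -> swp i (swp j x) = swp j (swp i x).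
Proof. have := swpP j x; have := swpP i (swp j x); have := swpP i x; have := swpP j (swp i x). lia. Qed.

Lemma act_cons i u x : act (i :: u) x = act u (swp i x). Proof. by []. Qed.
Lemma act_cat u v x : act (u ++ v) x = act v (act u x).
Proof. by rewrite /act foldl_cat. Qed.
Lemma act_rcons u i x : act (rcons u i) x = swp i (act u x).
Proof. by rewrite -cats1 act_cat. Qed.

Lemma act_revK u x : act (rev u) (act u x) = x.
Proof. elim: u x => //= i u IH x. by rewrite rev_cons act_rcons IH swpK. Qed.
Lemma act_Krev u x : act u (act (rev u) x) = x.
Proof. by rewrite -{1}(revK u) act_revK. Qed.

Lemma act_fix u x : all (fun i => i.+1 < x) u -> act u x = x.
Proof. elim: u => [//|i u IH] /andP [h1 h2]. rewrite act_cons.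
have -> : swp i x = x by have := swpP i x; lia. exact: IH. Qed.

Lemma act_lt u N x : all (fun i => i.+1 < N) u -> x < N -> act u x < N.
Proof. elim: u x => [//|i u IH] x /andP [h1 h2] hx. rewrite act_cons; apply: IH => //. have := swpP i x; lia. Qed.

Inductive zeq (A : nat -> bool) : seq nat -> seq nat -> Prop :=
| zq_refl u : zeq A u u
| zq_sym u v : zeq A u v -> zeq A v u
| zq_trans u v w : zeq A u v -> zeq A v w -> zeq A u w
| zq_ctx a b u v : zeq A u v -> zeq A (a ++ u ++ b) (a ++ v ++ b)
| zq_cancel i : A i -> zeq A [:: i; i] [::]
| zq_braid i : A i -> A i.+1 -> zeq A [:: i; i.+1; i] [:: i.+1; i; i.+1]
| zq_comm i j : A i -> A j -> i.+1 < j -> zeq A [:: i; j] [:: j; i].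

Lemma zeq_act A u v : zeq A u v -> act u =1 act v.
Proof.
elim => //=.
- by move=> ?? _ h x; rewrite h.
- by move=> ??? _ h1 _ h2 x; rewrite h1 h2.
- by move=> a b ?? _ h x; rewrite !act_cat h.
- by move=> i _ x; rewrite /act /= swpK.
- by move=> i _ _ x; rewrite /act /= swp_braid.
- by move=> i j _ _ h x; rewrite /act /= (swp_comm x h).
Qed.

Lemma zq_l (A : nat -> bool) a u v : zeq A u v -> zeq A (a ++ u) (a ++ v).
Proof. move=> h; have := zq_ctx a [::] h; by rewrite !cats0. Qed.
Lemma zq_r (A : nat -> bool) b u v : zeq A u v -> zeq A (u ++ b) (v ++ b).
Proof. move=> h; exact: (zq_ctx [::] b h). Qed.

Lemma zq_commute (A : nat -> bool) i s : A i -> all (fun k => A k && ((i.+1 < k) || (k.+1 < i))) s ->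
  zeq A (s ++ [:: i]) (i :: s).
Proof.
move=> Ai; elim: s => [|k s IH] /=; first by move=> _; exact: zq_refl.
case/andP=> /andP [Ak hk] hs.
apply: zq_trans (zq_l [:: k] (IH hs)) _.
change (zeq A ([:: k; i] ++ s) ([:: i; k] ++ s)).
apply: zq_r. case/orP: hk => hk; first by apply: zq_sym; apply: zq_comm.
exact: zq_comm.
Qed.

Definition cw (m d : nat) := map (fun k => m - k) (iota 0 d).

Lemma cwD m a b : cw m (a + b) = cw m a ++ map (fun k => m - k) (iota a b).
Proof. by rewrite /cw iotaD map_cat. Qed.

Lemma cwS m d : cw m d.+1 = rcons (cw m d) (m - d).
Proof. by rewrite -addn1 cwD cats1. Qed.

Lemma act_cw m d : d <= m.+1 -> act (cw m d) m.+1 = m.+1 - d.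
Proof.
elim: d => [|d IH] hd; first by rewrite subn0.
rewrite cwS act_rcons IH; last lia.
have := swpP (m - d) (m.+1 - d); lia.
Qed.

Lemma all_mapiota (P : pred nat) (F : nat -> nat) a b :
  (forall k, a <= k < a + b -> P (F k)) -> all P (map F (iota a b)).
Proof.
move=> h; apply/allP => x /mapP [k]; rewrite mem_iota => hk ->; exact: h.
Qed.

Lemma decomp (A : nat -> bool) m u : all (fun k => A k && (k <= m)) u ->
  exists w d, [/\ zeq A u (w ++ cw m d), all (fun k => A k && (k < m)) w, d <= m.+1
     & forall k, m.+1 - d <= k <= m -> A k].
Proof.
elim/last_ind: u => [|u i IH].
  move=> _; exists [::], 0; split => //; [exact: zq_refl | lia].
rewrite all_rcons => /andP [/andP [Ai him] hu].
have [w [d [hz hw hd hA]]] := IH hu.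
have hz' : zeq A (rcons u i) (w ++ cw m d ++ [:: i]).
  by rewrite -cats1 catA; apply: zq_r.
case: (ltngtP i.+1 (m.+1 - d)) => hc.
- (* commute *)
  exists (rcons w i), d; split => //.
  + apply: zq_trans hz' _; rewrite -cats1 -catA /=.
    apply: zq_l; apply: zq_commute => //.
    apply: all_mapiota => k hk; apply/andP; split; first by apply: hA; lia.
    apply/orP; left; lia.
  + by rewrite all_rcons Ai hw andbT; lia.
-
  case: (ltngtP i (m.+1 - d)) => hc2; first lia.
  + (* braid case: i > m+1-d *)
    have [r hdd] : exists r, d = (m - i) + 2 + r by exists (d - (m - i + 2)); lia.
    set a := m - i in hdd *.
    have hcw : cw m d = cw m a ++ [:: i; i.-1] ++ map (fun k => m - k) (iota (a + 2) r).
      rewrite hdd cwD cwD -catA; congr (_ ++ (_ ++ _)).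
      rewrite /= /a; congr [:: _; _]; lia.
    exists (rcons w i.-1), d; split => //.
    + apply: zq_trans hz' _. rewrite hcw.
      set R := map _ (iota (a + 2) r).
      have s1 : zeq A (R ++ [:: i]) (i :: R).
        apply: zq_commute => //.
        apply: all_mapiota => k hk; apply/andP; split; first by apply: hA; lia.
        apply/orP; right; lia.
      have s2 : zeq A [:: i; i.-1; i] [:: i.-1; i; i.-1].
        have e : i = i.-1.+1 by lia.
        rewrite [in X in zeq A X _]e [in X in zeq A _ X]e.
        apply: zq_sym; apply: zq_braid; rewrite -e; apply: hA; lia.
      have s3 : zeq A (cw m a ++ [:: i.-1]) (i.-1 :: cw m a).
        apply: zq_commute; first by apply: hA; lia.
        apply: all_mapiota => k hk; apply/andP; split; first by apply: hA; lia.
        apply/orP; left; lia.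
      have e1 : (w ++ (cw m a ++ [:: i; i.-1] ++ R) ++ [:: i]) = w ++ (cw m a ++ [:: i; i.-1]) ++ (R ++ [:: i]) by rewrite !catA.
      have e2 : rcons w i.-1 ++ (cw m a ++ [:: i; i.-1] ++ R) = w ++ ([:: i.-1] ++ cw m a) ++ ([:: i; i.-1] ++ R) by rewrite -cats1 !catA.
      rewrite e1 e2; apply: zq_l.
      apply: (zq_trans (zq_l _ s1)).
      have e3 : (cw m a ++ [:: i; i.-1]) ++ i :: R = cw m a ++ [:: i; i.-1; i] ++ R by rewrite -catA.
      rewrite e3. apply: (zq_trans (zq_ctx _ _ s2)).
      have e4 : cw m a ++ [:: i.-1; i; i.-1] ++ R = (cw m a ++ [:: i.-1]) ++ [:: i; i.-1] ++ R by rewrite -catA.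
      rewrite e4; apply: zq_r; exact: s3.
    + rewrite all_rcons hw andbT; apply/andP; split; [apply: hA|]; lia.
  + (* i = m+1-d : cancel *)
    have hd1 : 0 < d by lia.
    exists w, d.-1; split => //; last 2 first.
    * lia.
    * move=> k hk; apply: hA; lia.
    apply: zq_trans hz' _.
    have -> : cw m d = rcons (cw m d.-1) i by rewrite -(ltn_predK hd1) cwS; congr rcons; lia.
    rewrite -cats1 -!catA; apply: zq_l.
    have := zq_l (cw m d.-1) (zq_cancel Ai); by rewrite cats0.
- (* i.+1 = m.+1 - d : extend *)
  exists w, d.+1; split.
  + rewrite cwS; have -> : m - d = i by lia. by rewrite -(cats1 (cw m d)).
  + exact: hw.
  + lia.
  + move=> k hk; case: (k =P i) => [->//|?]; apply: hA; lia.
Qed.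

Lemma core (A : nat -> bool) m u v :
  all (fun k => A k && (k < m)) u -> all (fun k => A k && (k < m)) v ->
  act u =1 act v -> zeq A u v.
Proof.
elim: m u v => [|m IH] u v hu hv he.
  case: u hu he => [|k u] /=; last by rewrite ltn0 andbF.
  case: v hv => [|k v] /=; last by rewrite ltn0 andbF.
  by move=> *; exact: zq_refl.
have [w1 [d1 [z1 hw1 hd1 _]]] := decomp hu.
have [w2 [d2 [z2 hw2 hd2 _]]] := decomp hv.
have fx : forall w, all (fun k => A k && (k < m)) w -> act w m.+1 = m.+1.
  move=> w hw; apply: act_fix; apply: sub_all hw => k /andP [_]; lia.
have h1 := zeq_act z1 m.+1; have h2 := zeq_act z2 m.+1.
rewrite act_cat (fx w1 hw1) act_cw // in h1.
rewrite act_cat (fx w2 hw2) act_cw // in h2.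
have ed : d1 = d2 by move: (he m.+1); lia.
subst d2.
have hw : act w1 =1 act w2.
  move=> x; rewrite -(act_revK (cw m d1) (act w1 x)) -(act_revK (cw m d1) (act w2 x)).
  by rewrite -(act_cat w1) -(act_cat w2) -(zeq_act z1) -(zeq_act z2) he.
apply: zq_trans z1 _; apply: zq_sym; apply: zq_trans z2 _.
apply: zq_r; apply: zq_sym; exact: IH.
Qed.
Section Words.
Variable n : nat.
Notation W := (seq (gen n)).

Lemma bc_l (a u v : W) : brcong u v -> brcong (a ++ u) (a ++ v).
Proof. move=> h; have := c_ctx a [::] h; by rewrite !cats0. Qed.
Lemma bc_r (b u v : W) : brcong u v -> brcong (u ++ b) (v ++ b).
Proof. move=> h; exact: (c_ctx [::] b h). Qed.

Lemma ecomm1 i (X : W) : brcong (ge i :: X) (X ++ [:: ge i]).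
Proof.
elim: X => [|g X IH]; first exact: c_refl.
apply: c_trans (_ : brcong (g :: ge i :: X) _).
  change (brcong ([:: ge i; g] ++ X) ([:: g; ge i] ++ X)); apply: bc_r; apply: c_base.
  case: g => j; [exact: r_ecomm | exact: r_ez].
exact: (bc_l [:: g] IH).
Qed.

Lemma ecomm (s : seq 'I_n.-1) (X : W) : brcong (map (@ge n) s ++ X) (X ++ map (@ge n) s).
Proof.
elim: s => [|i s IH] /=; first by rewrite cats0; exact: c_refl.
apply: c_trans (bc_l [:: ge i] IH) _.
have := bc_r (map (@ge n) s) (ecomm1 i X); by rewrite -catA.
Qed.

Lemma eabsorb (s : seq 'I_n.-1) i : i \in s ->
  brcong (map (@ge n) s ++ [:: ge i]) (map (@ge n) s).
Proof.
elim: s => [//|j s IH]; rewrite inE => /orP [/eqP ->|hi] /=.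
- apply: c_trans (bc_l [:: ge j] (c_sym (ecomm1 j (map (@ge n) s)))) _.
  change (brcong ([:: ge j; ge j] ++ map (@ge n) s) ([:: ge j] ++ map (@ge n) s)).
  apply: bc_r; apply: c_base; exact: r_ee.
- exact: (bc_l [:: ge j] (IH hi)).
Qed.

Lemma eabsorbs (s t : seq 'I_n.-1) : {subset t <= s} ->
  brcong (map (@ge n) s ++ map (@ge n) t) (map (@ge n) s).
Proof.
elim: t => [|j t IH] hsub /=; first by rewrite cats0; exact: c_refl.
rewrite -cat1s catA; apply: c_trans (bc_r _ (eabsorb _)) _.
  by apply: hsub; rewrite inE eqxx.
apply: IH => x hx; apply: hsub; by rewrite inE hx orbT.
Qed.

Lemma esame (s t : seq 'I_n.-1) : s =i t -> brcong (map (@ge n) s) (map (@ge n) t).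
Proof.
move=> e; apply: c_trans (c_sym (eabsorbs (t := t) _)) _.
  by move=> x; rewrite e.
apply: c_trans (ecomm _ _) _; apply: eabsorbs => x; by rewrite e.
Qed.

Definition gidx (g : gen n) : 'I_n.-1 := match g with ge i => i | gz i => i end.
Definition gzidx (g : gen n) : option 'I_n.-1 := match g with ge _ => None | gz i => Some i end.
Definition eI (w : W) := map gidx w.
Definition zI (w : W) := pmap gzidx w.

Lemma normalize (w : W) : brcong w (map (@ge n) (eI w) ++ map (@gz n) (zI w)).
Proof.
elim: w => [|g w IH]; first exact: c_refl.
case: g => i /=.
  exact: (bc_l [:: ge i] IH).
apply: c_trans (bc_l [:: gz i] IH) _.
apply: (c_trans (v := [:: ge i; gz i] ++ (map (@ge n) (eI w) ++ map (@gz n) (zI w)))).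
  apply: bc_r; apply: c_sym; apply: c_base; exact: r_ezi.
apply: (bc_l [:: ge i]).
set E := map (@ge n) (eI w); set Z := map (@gz n) (zI w).
rewrite -[gz i :: Z]cat1s -[gz i :: _]cat1s !catA. apply: bc_r.
exact: c_sym (ecomm _ _).
Qed.

Definition tog (u : seq nat) : W := map (@gz n) (pmap insub u).

Lemma tog_cat u v : tog (u ++ v) = tog u ++ tog v.
Proof. by rewrite /tog pmap_cat map_cat. Qed.

Lemma tog1 k (hk : k < n.-1) : tog [:: k] = [:: gz (Ordinal hk)].
Proof. by rewrite /tog /= insubT. Qed.

Lemma zeq_bc (A : nat -> bool) (s : seq 'I_n.-1) u v : zeq A u v ->
  (forall k, A k -> k < n.-1) -> (forall k, A k -> k \in map val s) ->
  brcong (map (@ge n) s ++ tog u) (map (@ge n) s ++ tog v).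
Proof.
move=> h hA hs; elim: h.
- move=> *; exact: c_refl.
- move=> ?? _ h1; exact: c_sym h1.
- move=> ??? _ h1 _ h2; exact: c_trans h1 h2.
- move=> a b u' v' _ IH.
  rewrite !tog_cat.
  apply: c_trans (_ : brcong (tog a ++ (map (@ge n) s ++ tog u') ++ tog b) _).
    rewrite !catA; apply: bc_r; apply: bc_r; exact: ecomm.
  apply: c_trans (_ : brcong (tog a ++ (map (@ge n) s ++ tog v') ++ tog b) _).
    apply: bc_l; exact: bc_r.
  rewrite !catA; apply: bc_r; apply: bc_r; exact: c_sym (ecomm _ _).
- move=> i Ai.
  have hk := hA _ Ai.
  have -> : tog [:: i; i] = [:: gz (Ordinal hk); gz (Ordinal hk)] by rewrite (tog_cat [:: i]) tog1.
  apply: c_trans (bc_l _ (c_base (r_zz (Ordinal hk)))) _.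
  rewrite cats0; apply: eabsorb.
  have /mapP [j hj ej] := hs _ Ai.
  by have -> : Ordinal hk = j by apply: val_inj.
- move=> i Ai Ai1.
  have hk := hA _ Ai; have hk1 := hA _ Ai1.
  rewrite -[[:: i; i.+1; i]]/([:: i] ++ [:: i.+1] ++ [:: i]) -[[:: i.+1; i; i.+1]]/([:: i.+1] ++ [:: i] ++ [:: i.+1]).
  rewrite !tog_cat (tog1 hk) (tog1 hk1) /=.
  apply: bc_l; apply: c_base; apply: r_braid; by left.
- move=> i j Ai Aj hij.
  have hk := hA _ Ai; have hk1 := hA _ Aj.
  rewrite -[[:: i; j]]/([:: i] ++ [:: j]) -[[:: j; i]]/([:: j] ++ [:: i]).
  rewrite !tog_cat (tog1 hk) (tog1 hk1) /=.
  apply: bc_l; apply: c_base; apply: r_zcomm; by left.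
Qed.

End Words.
Section Sem.
Variable n : nat.

Definition PP (f : nat -> nat) (x y : nat) : bool :=
  if (x < n) == (y < n) then x == y else if x < n then y - n == f x else x - n == f y.

Definition permpart (f : nat -> nat) : spart n := [ffun p => PP f (val p.1) (val p.2)].

Definition linked (S : seq nat) a b :=
  all (fun k => k \in S) (iota (minn a b) (maxn a b - minn a b)).

Definition boxpart (S : seq nat) : spart n := [ffun p => linked S (val p.1 %% n) (val p.2 %% n)].

Lemma linkedP S a b : reflect (forall k, minn a b <= k < maxn a b -> k \in S) (linked S a b).
Proof.
apply: (iffP allP) => h k.
- move=> hk; apply: h; rewrite mem_iota; lia.
- rewrite mem_iota => hk; apply: h; lia.
Qed.

Lemma linked_refl S a : linked S a a.
Proof. apply/linkedP => k; lia. Qed.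
Lemma linked_sym S a b : linked S a b = linked S b a.
Proof. by rewrite /linked minnC maxnC. Qed.
Lemma linked_trans S a b c : linked S a b -> linked S b c -> linked S a c.
Proof.
move=> /linkedP h1 /linkedP h2; apply/linkedP => k hk.
case: (leqP (minn a b) k) => h3; case: (ltnP k (maxn a b)) => h4.
- apply: h1; lia.
- apply: h2; lia.
- apply: h2; lia.
- apply: h2; lia.
Qed.
Lemma linked_sub S T a b : {subset S <= T} -> linked S a b -> linked T a b.
Proof. move=> hs /linkedP h; apply/linkedP => k hk; apply: hs; exact: h. Qed.
Lemma linked_eq S T a b : S =i T -> linked S a b = linked T a b.
Proof. move=> e; apply/idP/idP; apply: linked_sub => x; by rewrite e. Qed.
Lemma linked1 S k : linked S k k.+1 = (k \in S).
Proof.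
apply/linkedP/idP => [h|h j hj]; first by apply: h; lia.
by have -> : j = k by lia.
Qed.

Definition bij (f fi : nat -> nat) := forall x, x < n ->
  [/\ f x < n, fi x < n, fi (f x) = x & f (fi x) = x].

Definition L (fi : nat -> nat) (c : nat) := if c < n then c else fi (c - n).

Lemma PP_lab f fi c d : bij f fi -> c < n + n -> d < n + n -> PP f c d = (L fi c == L fi d).
Proof.
move=> hb hc hd; rewrite /PP /L.
case: (ltnP c n) => h1; case: (ltnP d n) => h2 /=.
- by [].
- have [h3 h4 h5 h6] := hb (d - n) ltac:(lia).
  have [h3' h4' h5' h6'] := hb c h1.
  apply/eqP/eqP => h; [rewrite h h5' | rewrite h h6] => //.
- have [h3 h4 h5 h6] := hb (c - n) ltac:(lia).
  have [h3' h4' h5' h6'] := hb d h2.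
  apply/eqP/eqP => h; [rewrite h h5' | rewrite -h h6] => //.
- have [h3 h4 h5 h6] := hb (c - n) ltac:(lia).
  have [h3' h4' h5' h6'] := hb (d - n) ltac:(lia).
  apply/eqP/eqP => h; first by rewrite h.
  have : f (fi (c - n)) = f (fi (d - n)) by rewrite h.
  rewrite h6 h6'; lia.
Qed.

Lemma rel_natE (P : spart n) c d (hc : c < n + n) (hd : d < n + n) :
  rel_nat P c d = P (Ordinal hc, Ordinal hd).
Proof. by rewrite /rel_nat !insubT. Qed.

Lemma rel_nat_ord (P : spart n) (a b : 'I_(n + n)) : rel_nat P a b = P (a, b).
Proof. by rewrite /rel_nat !valK. Qed.

Lemma rel_nat_bnd (P : spart n) c d : rel_nat P c d -> (c < n + n) && (d < n + n).
Proof. by rewrite /rel_nat; case: insubP => // a ha _; case: insubP => // b hb _; rewrite ha hb. Qed.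

Lemma rel_nat_perm f c d : rel_nat (permpart f) c d = [&& c < n + n, d < n + n & PP f c d].
Proof.
case: (ltnP c (n + n)) => hc; case: (ltnP d (n + n)) => hd /=;
  try by apply/negbTE/negP => /rel_nat_bnd; lia.
by rewrite rel_natE ffunE.
Qed.

Lemma rel_nat_box S c d : rel_nat (boxpart S) c d = [&& c < n + n, d < n + n & linked S (c %% n) (d %% n)].
Proof.
case: (ltnP c (n + n)) => hc; case: (ltnP d (n + n)) => hd /=;
  try by apply/negbTE/negP => /rel_nat_bnd; lia.
by rewrite rel_natE ffunE.
Qed.


Lemma out_lt (a : 'I_(n + n)) : out_pt n a < n + n + n.
Proof. have := ltn_ord a; rewrite /out_pt; case: ifP; lia. Qed.

Definition oo (a : 'I_(n + n)) : 'I_(n + n + n) := Ordinal (out_lt a).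

Lemma pmulE (I J : spart n) p : pmul I J p = connect (cat_edge I J) (oo p.1) (oo p.2).
Proof.
rewrite ffunE; apply/existsP/idP => [[a /existsP [b /and3P [/eqP ha /eqP hb c]]] | h].
  have -> : oo p.1 = a by apply: val_inj; rewrite /= ha.
  by have -> : oo p.2 = b by apply: val_inj; rewrite /= hb.
exists (oo p.1); apply/existsP; exists (oo p.2); by rewrite /= !eqxx h.
Qed.

Definition cnb (e : rel 'I_(n + n + n)) (c d : nat) :=
  if (insub c : option 'I_(n + n + n)) is Some a then
    (if (insub d : option 'I_(n + n + n)) is Some b then connect e a b else false)
  else false.

Lemma cnbE (e : rel 'I_(n + n + n)) (a b : 'I_(n + n + n)) : cnb e a b = connect e a b.
Proof. by rewrite /cnb !valK. Qed.

Lemma cnb_refl (e : rel 'I_(n + n + n)) c : c < n + n + n -> cnb e c c.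
Proof. by move=> hc; rewrite /cnb insubT connect0. Qed.

Lemma cnb_edge (e : rel 'I_(n + n + n)) c d (hc : c < n + n + n) (hd : d < n + n + n) :
  e (Ordinal hc) (Ordinal hd) -> cnb e c d.
Proof. by move=> h; rewrite /cnb !insubT; apply: connect1. Qed.

Lemma cnb_trans (e : rel 'I_(n + n + n)) c d x : cnb e c d -> cnb e d x -> cnb e c x.
Proof.
rewrite /cnb; case: insubP => // a _ _; case: insubP => // b _ _ h1.
case: insubP => // c' _ _; exact: connect_trans.
Qed.

Lemma cnb_sym (e : rel 'I_(n + n + n)) c d : symmetric e -> cnb e c d -> cnb e d c.
Proof.
move=> hs; rewrite /cnb; case: insubP => // a _ _; case: insubP => // b _ _.
by rewrite (sym_connect_sym hs).
Qed.


Lemma conn_inv (T : finType) (e : rel T) (R : T -> Prop) a b :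
  R a -> (forall y z, R y -> e y z -> R z) -> connect e a b -> R b.
Proof.
move=> h0 hs /connectP [p]; elim: p a h0 => [|y p IH] a h0 /=; first by move=> _ ->.
case/andP => h1 h2 hb; exact: (IH y (hs _ _ h0 h1) h2 hb).
Qed.

Lemma cat_edge_sym (I J : spart n) :
  (forall c d, rel_nat I c d = rel_nat I d c) -> (forall c d, rel_nat J c d = rel_nat J d c) ->
  symmetric (cat_edge I J).
Proof. by move=> hI hJ a b; rewrite /cat_edge hI hJ andbCA. Qed.

Lemma bij_comp f fi g gi : bij f fi -> bij g gi -> bij (fun x => g (f x)) (fun x => fi (gi x)).
Proof.
move=> hf hg x hx.
have [f1 f2 f3 f4] := hf x hx; have [g1 g2 g3 g4] := hg (f x) f1.
have [g1' g2' g3' g4'] := hg x hx; have [f1' f2' f3' f4'] := hf (gi x) g2'.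
by split; rewrite ?g3 ?f3 ?f4' ?g4'.
Qed.

Lemma pmul_perm f fi g gi : bij f fi -> bij g gi ->
  pmul (permpart f) (permpart g) = permpart (fun x => g (f x)).
Proof.
move=> hbf hbg; apply/ffunP => -[a b]; rewrite pmulE ffunE /=.
set e := cat_edge _ _.
pose lab c := if c < n then c else fi (L gi (c - n)).
have labL : forall y, y < n + n -> lab y = L fi y.
  move=> y hy; rewrite /lab /L; case: ltnP => // h; rewrite /L ifT //; lia.
have hedge : forall y z : 'I_(n + n + n), e y z -> lab y = lab z.
  move=> y z; rewrite /e /cat_edge !rel_nat_perm.
  case/orP => [/and3P [hy hz hP] | /and3P [hy hz /and3P [hy' hz' hP]]].
    by rewrite (PP_lab hbf hy hz) in hP; rewrite !labL // (eqP hP).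
  rewrite (PP_lab hbg hy' hz') in hP.
  by rewrite /lab !ifF ?(eqP hP) //; apply/negbTE; rewrite -leqNgt.
have labO : forall a : 'I_(n + n), lab (oo a) = L (fun x => fi (gi x)) a.
  move=> c; rewrite /lab /L /= /out_pt; case: (ltnP c n) => h /=; first by rewrite h.
  rewrite ifF; last lia. rewrite ifF; last lia. by rewrite addnK.
have hab := ltn_ord a; have hbb := ltn_ord b.
rewrite (PP_lab (bij_comp hbf hbg) hab hbb).
apply/idP/eqP.
  move=> hc; rewrite -!labO.
  apply: (conn_inv (R := fun z : 'I_(n + n + n) => lab (oo a) = lab z) _ _ hc) => // y z -> ; exact: hedge.
have hsym : symmetric e.
  apply: cat_edge_sym => c d; rewrite !rel_nat_perm andbCA;
  case: (ltnP c (n + n)) => hc; case: (ltnP d (n + n)) => hd //=.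
  by rewrite (PP_lab hbf hc hd) (PP_lab hbf hd hc) eq_sym.
  by rewrite (PP_lab hbg hc hd) (PP_lab hbg hd hc) eq_sym.
have claim : forall a : 'I_(n + n), cnb e (L (fun x => fi (gi x)) a) (oo a).
  move=> c; rewrite /L /= /out_pt; case: ltnP => hc; first by apply: cnb_refl; lia.
  have hc2 := ltn_ord c.
  have [g1 g2 g3 g4] := hbg (c - n) ltac:(lia).
  have [f1 f2 f3 f4] := hbf (gi (c - n)) g2.
  set x := fi (gi (c - n)) in f1 f2 f3 f4 *.
  have fx : f x < n by rewrite f4.
  have E1 : x < n + n + n by lia.
  have E2 : n + f x < n + n + n by lia.
  have E3 : c + n < n + n + n by lia.
  apply: (cnb_trans (d := n + f x)).
    apply: (cnb_edge (e := e) (hc := E1) (hd := E2)); rewrite /e /cat_edge /=; apply/orP; left.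
    rewrite rel_nat_perm (PP_lab hbf) /L; try lia.
    apply/and3P; split; try lia.
    rewrite f2 (_ : n + f x < n = false); last lia.
    by rewrite addKn f4.
  apply: (cnb_edge (e := e) (hc := E2) (hd := E3)); rewrite /e /cat_edge /=; apply/orP; right.
  rewrite rel_nat_perm (PP_lab hbg) /L; try lia.
  apply/and4P; split; try lia.
  rewrite addKn addnK fx (_ : c < n = false); last lia. by rewrite f4 eqxx andbT.
move=> hl; rewrite -cnbE.
apply: (cnb_trans (cnb_sym hsym (claim a))); rewrite hl; exact: claim.
Qed.

Lemma modn_subn y : n <= y -> (y - n) %% n = y %% n.
Proof. by move=> h; rewrite -{2}(subnK h) modnDr. Qed.

Lemma pmul_box S T : pmul (boxpart S) (boxpart T) = boxpart (S ++ T).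
Proof.
apply/ffunP => -[a b]; rewrite pmulE ffunE /=.
set e := cat_edge _ _.
have hedge : forall y z : 'I_(n + n + n), e y z -> linked (S ++ T) (y %% n) (z %% n).
  move=> y z; rewrite /e /cat_edge !rel_nat_box.
  case/orP => [/and3P [hy hz hP] | /and3P [hy hz /and3P [hy' hz' hP]]].
    by apply: linked_sub hP => x; rewrite mem_cat => ->.
  rewrite !modn_subn // in hP.
  by apply: linked_sub hP => x; rewrite mem_cat orbC => ->.
have modO : forall c : 'I_(n + n), oo c %% n = c %% n.
  by move=> c; rewrite /= /out_pt; case: ifP => // _; rewrite modnDr.
apply/idP/idP.
  move=> hc; rewrite -(modO a) -(modO b).
  apply: (conn_inv (R := fun z : 'I_(n + n + n) => linked (S ++ T) (oo a %% n) (z %% n)) _ _ hc).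
    exact: linked_refl.
  by move=> y z h1 h2; apply: linked_trans h1 (hedge _ _ h2).
have hsym : symmetric e.
  apply: cat_edge_sym => c d; rewrite !rel_nat_box andbCA linked_sym //.
have hn : 0 < n by have := ltn_ord a; lia.
have c1 : forall c, c < n + n + n -> cnb e (c %% n) c.
  have c1a : forall c, c < n + n -> cnb e (c %% n) c.
    move=> c hc.
    have h1 : c %% n < n + n + n by have := ltn_pmod c hn; lia.
    have h2 : c < n + n + n by lia.
    apply: (cnb_edge (e := e) (hc := h1) (hd := h2)); rewrite /e /cat_edge /=; apply/orP; left.
    rewrite rel_nat_box modn_mod linked_refl andbT; have := ltn_pmod c hn; lia.
  move=> c hc; case: (ltnP c (n + n)) => h; first exact: c1a.
  rewrite -(modn_subn (_ : n <= c)); last lia.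
  apply: cnb_trans (c1a _ _) _; first lia.
  have h1 : c - n < n + n + n by lia.
  apply: (cnb_edge (e := e) (hc := h1) (hd := hc)); rewrite /e /cat_edge /=; apply/orP; right.
  rewrite rel_nat_box !modn_subn; try lia. rewrite linked_refl andbT; apply/and4P; split; lia.
have c2 : forall k, k \in S ++ T -> k.+1 < n -> cnb e k k.+1.
  move=> k; rewrite mem_cat => /orP [hk|hk] hk1.
    have h1 : k < n + n + n by lia.
    have h2 : k.+1 < n + n + n by lia.
    apply: (cnb_edge (e := e) (hc := h1) (hd := h2)); rewrite /e /cat_edge /=; apply/orP; left.
    by rewrite rel_nat_box !modn_small ?linked1 ?hk //; try lia; apply/andP; split; lia.
  have h1 : n + k < n + n + n by lia.
  have h2 : n + k.+1 < n + n + n by lia.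
  have := c1 _ h1; rewrite modnDl modn_small; last lia. move=> p1.
  have := c1 _ h2; rewrite modnDl modn_small; last lia. move=> p3.
  apply: cnb_trans p1 _; apply: cnb_trans _ (cnb_sym hsym p3).
  apply: (cnb_edge (e := e) (hc := h1) (hd := h2)); rewrite /e /cat_edge /=; apply/orP; right.
  by rewrite rel_nat_box !addKn !modn_small ?linked1 ?hk; try lia.
have c3 : forall p q, linked (S ++ T) p q -> p <= q -> q < n -> cnb e p q.
  move=> p q hl hpq hq; elim: q hpq hq hl => [|q IH] hpq hq hl.
    have -> : p = 0 by lia. apply: cnb_refl; lia.
  case: (ltnP p q.+1) => hp; last first.
    have -> : p = q.+1 by lia. apply: cnb_refl; lia.
  apply: (cnb_trans (d := q)).
    apply: IH; try lia. move/linkedP: hl => hl; apply/linkedP => k hk; apply: hl; lia.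
  apply: c2; last lia. move/linkedP: hl; apply; lia.
move=> hl; rewrite -cnbE.
have ha := c1 _ (ltn_ord (oo a)); have hb := c1 _ (ltn_ord (oo b)).
rewrite modO in ha; rewrite modO in hb.
apply: cnb_trans (cnb_sym hsym ha) _; apply: cnb_trans _ hb.
have pa := ltn_pmod a hn; have pb := ltn_pmod b hn.
case: (leqP (a %% n) (b %% n)) => h; first exact: c3.
apply: cnb_sym => //; apply: c3; rewrite 1?linked_sym //; lia.
Qed.

Lemma modlt x : x < n + n -> x %% n = if x < n then x else x - n.
Proof.
move=> hx; case: ltnP => h; first by rewrite modn_small.
by rewrite -modn_subn // modn_small; lia.
Qed.

Lemma pone_perm : pone n = permpart (fun x => x).
Proof.
apply/ffunP => -[a b]; rewrite !ffunE /PP /= (modlt (ltn_ord a)) (modlt (ltn_ord b)).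
have := ltn_ord a; have := ltn_ord b.
case: (ltnP a n) => ha; case: (ltnP b n) => hb /= *; apply/eqP/eqP; lia.
Qed.

Lemma linked_nil x y : linked [::] x y = (x == y).
Proof.
apply/linkedP/eqP => [h|-> k]; last lia.
case: (ltngtP x y) => // hxy; move: (h (minn x y)); rewrite in_nil; lia.
Qed.

Lemma pone_box : pone n = boxpart [::].
Proof. by apply/ffunP => -[a b]; rewrite !ffunE linked_nil. Qed.

Lemma ps_perm i : ps n i = permpart (swp i).
Proof. by apply/ffunP => p; rewrite !ffunE. Qed.

Lemma linked_one i x y :
  (x == y) || ((x \in [:: i; i.+1]) && (y \in [:: i; i.+1])) = linked [:: i] x y.
Proof.
rewrite !inE; apply/idP/linkedP.
  case/orP => [/eqP -> k | /andP [/orP [] /eqP -> /orP [] /eqP ->] k] hk; rewrite mem_seq1; apply/eqP; lia.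
move=> h; case: (x =P y) => //= hxy.
have e1 : minn x y = i by apply/eqP; rewrite -(mem_seq1 (minn x y) i); apply: h; lia.
have e2 : maxn x y = i.+1.
  case: (ltnP (minn x y).+1 (maxn x y)) => h3; last lia.
  have := h (minn x y).+1; rewrite mem_seq1 => /(_ ltac:(lia)) /eqP; lia.
have [hx|hx] : x = i \/ x = i.+1 by lia.
all: have [hy|hy] : y = i \/ y = i.+1 by lia.
all: by rewrite hx hy !eqxx ?orbT.
Qed.

Lemma pb_box (i : 'I_n.-1) : pb n i = boxpart [:: val i].
Proof. by apply/ffunP => p; rewrite !ffunE linked_one. Qed.

Definition zs (w : seq (gen n)) := map val (zI w).
Definition ids (w : seq (gen n)) := map val (eI w).

Lemma zs_lt w : all (fun i => i.+1 < n) (zs w).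
Proof.
apply/allP => k /mapP [i _ ->]; rewrite -ltn_predRL; exact: ltn_ord.
Qed.

Lemma ids_lt w : all (fun i => i.+1 < n) (ids w).
Proof.
apply/allP => k /mapP [i _ ->]; rewrite -ltn_predRL; exact: ltn_ord.
Qed.

Lemma bij_act u : all (fun i => i.+1 < n) u -> bij (act u) (act (rev u)).
Proof.
move=> hu x hx; split; rewrite ?act_revK ?act_Krev //; apply: act_lt => //.
by rewrite all_rev.
Qed.

Lemma bij_id : bij (fun x => x) (fun x => x).
Proof. by move=> x hx; split. Qed.

Lemma bij_swp i : i.+1 < n -> bij (swp i) (swp i).
Proof. move=> hi x hx; rewrite swpK; split => //; have := swpP i x; lia. Qed.

Lemma evalE w : eval w = (permpart (act (zs w)), boxpart (ids w)).
Proof.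
elim: w => [|g w IH] /=.
  rewrite /brone; congr pair; [exact: pone_perm | exact: pone_box].
rewrite IH /brmul /=; case: g => i /=.
  rewrite pone_perm pb_box (pmul_perm bij_id (bij_act (zs_lt w))) pmul_box //.
have hi : (val i).+1 < n by rewrite -ltn_predRL; exact: ltn_ord.
by rewrite ps_perm pb_box (pmul_perm (bij_swp hi) (bij_act (zs_lt w))) pmul_box.
Qed.

Lemma Lhi fi c : n <= c -> L fi c = fi (c - n).
Proof. by move=> h; rewrite /L ltnNge h. Qed.
Lemma Llo fi c : c < n -> L fi c = c.
Proof. by move=> h; rewrite /L h. Qed.

Lemma setpart_lab (P : spart n) (F : 'I_(n + n) -> nat) :
  (forall a b, P (a, b) = (F a == F b)) -> is_setpart P.
Proof.
move=> h; apply/and3P; split.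
- by apply/forallP => x; rewrite h.
- by apply/forallP => x; apply/forallP => y; apply/implyP; rewrite !h eq_sym.
- apply/forallP => x; apply/forallP => y; apply/forallP => z.
  by apply/implyP; rewrite !h => /eqP ->; apply/implyP.
Qed.

Lemma in_BR_pb S f fi : bij f fi -> (forall x, x < n -> linked S x (f x)) ->
  in_BR (permpart f, boxpart S).
Proof.
move=> hb hl.
have hP : forall a b : 'I_(n + n), permpart f (a, b) = (L fi a == L fi b).
  by move=> a b; rewrite ffunE /= (PP_lab hb).
have hLlt : forall a : 'I_(n + n), L fi a < n.
  move=> a; rewrite /L; case: (ltnP a n) => // h; have := ltn_ord a => h2.
  by have [_ ? _ _] := hb (a - n) ltac:(lia).
apply/and5P; split.
- exact: (setpart_lab hP).
- apply/and3P; split.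
  + by apply/forallP => x; rewrite ffunE /= linked_refl.
  + by apply/forallP => x; apply/forallP => y; apply/implyP; rewrite !ffunE /= linked_sym.
  + apply/forallP => x; apply/forallP => y; apply/forallP => z; apply/implyP; rewrite !ffunE /=.
    move=> h1; apply/implyP; exact: linked_trans.
- apply/forallP => x; apply/andP; split; apply/cards1P.
  + have hy0 : L fi x < n + n by have := hLlt x; lia.
    exists (Ordinal hy0); apply/setP => y; rewrite !inE hP /=.
    apply/idP/idP => [/andP [/eqP h1 h2]|/eqP h1].
      apply/eqP; apply: val_inj => /=; rewrite h1 /L ifT //.
    have e : forall c, c < n -> L fi c = c by move=> c hc; rewrite /L hc.
    by rewrite h1 /= (e (L fi x) (hLlt x)) eqxx (hLlt x).
  + have [f1 f2 f3 f4] := hb (L fi x) (hLlt x).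
    have hy1 : n + f (L fi x) < n + n by lia.
    exists (Ordinal hy1); apply/setP => y; rewrite !inE hP /=.
    apply/idP/idP => [/andP [/eqP h1 h2]|/eqP h1].
      apply/eqP; apply: val_inj => /=.
      have := ltn_ord y => hy2.
      have [g1 g2 g3 g4] := hb (y - n) ltac:(lia).
      rewrite h1 (Lhi fi h2) g4; lia.
    rewrite h1 /= (Lhi fi (_ : n <= n + f (L fi x))) ?addKn ?f3 ?eqxx //; lia.
- apply/andP; split.
  + by apply/forallP => p; apply/implyP; rewrite !ffunE => /eqP ->; rewrite linked_refl.
  + apply/forallP => x; apply/forallP => y; apply/forallP => z; apply/implyP.
    rewrite !ffunE /= => /and4P [h1 h2 h3 /linkedP h4]; apply/linkedP => k hk.
    apply: h4; move: hk; rewrite !modn_small; lia.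
- apply/forallP => -[a b]; apply/implyP; rewrite hP ffunE /=.
  have key : forall a : 'I_(n + n), linked S (a %% n) (L fi a).
    move=> c; have := ltn_ord c => ha; rewrite (modlt ha) /L.
    case: (ltnP c n) => h; first exact: linked_refl.
    have [f1 f2 f3 f4] := hb (c - n) ltac:(lia).
    by have := hl _ f2; rewrite f4 linked_sym.
  move=> /eqP h; apply: linked_trans (key a) _; rewrite h linked_sym; exact: key.
Qed.

Lemma act_linked S u x : all (fun i => i \in S) u -> linked S x (act u x).
Proof.
elim: u x => [|i u IH] x; first by move=> _; exact: linked_refl.
case/andP => hi hu; rewrite act_cons; apply: linked_trans (IH _ hu).
have := swpP i x => -[[-> ->]|[[-> ->]|[_ [_ ->]]]].
- by rewrite linked1.
- by rewrite linked_sym linked1.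
- exact: linked_refl.
Qed.

Lemma zs_ids w : {subset zs w <= ids w}.
Proof.
elim: w => [//|g w IH] k; case: g => i; rewrite /zs /ids /= -/(zs w) -/(ids w) ?inE.
  by move=> h; rewrite (IH k h) orbT.
by case/orP => [->//|h]; rewrite (IH k h) orbT.
Qed.

Lemma part1 (w : seq (gen n)) : in_BR (eval w).
Proof.
rewrite evalE; apply: (in_BR_pb (bij_act (zs_lt w))) => x _.
apply: act_linked; apply/allP; exact: zs_ids.
Qed.

Lemma zs_cat (u v : seq (gen n)) : zs (u ++ v) = zs u ++ zs v.
Proof. by rewrite /zs /zI pmap_cat map_cat. Qed.
Lemma ids_cat (u v : seq (gen n)) : ids (u ++ v) = ids u ++ ids v.
Proof. by rewrite /ids /eI !map_cat. Qed.

Lemma sound (u v : seq (gen n)) : brcong u v -> act (zs u) =1 act (zs v) /\ ids u =i ids v.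
Proof.
elim => {u v}.
- move=> u v; case => {u v}.
  + by move=> i; split => // k; rewrite /ids /= !inE orbb.
  + by move=> i j; split => // k; rewrite /ids /= !inE orbC.
  + move=> i j h; split; last by move=> k; rewrite /ids /= !inE; case: (k == val i); case: (k == val j).
    move=> x; rewrite /zs /= /act /=.
    have {h}h : (nat_of_ord i).+1 = nat_of_ord j \/ (nat_of_ord j).+1 = nat_of_ord i := h.
    move: (nat_of_ord i) (nat_of_ord j) h => a b [<-|<-]; [exact: swp_braid | by rewrite swp_braid].
  + move=> i j h; split; last by move=> k; rewrite /ids /= !inE orbC.
    move=> x; rewrite /zs /= /act /=.
    have {h}h : (nat_of_ord i).+1 < nat_of_ord j \/ (nat_of_ord j).+1 < nat_of_ord i := h.
    move: (nat_of_ord i) (nat_of_ord j) h => a b [h|h]; by rewrite (swp_comm _ h).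
  + by move=> i j; split => // k; rewrite /ids /= !inE orbC.
  + move=> i; split; last by move=> k; rewrite /ids /= !inE orbb.
    by move=> x; rewrite /zs /= /act /= swpK.
  + by move=> i; split => // k; rewrite /ids /= !inE orbb.
- by move=> u; split.
- by move=> u v _ [h1 h2]; split => x; rewrite ?h1 ?h2.
- by move=> u v w _ [h1 h2] _ [h3 h4]; split => x; rewrite ?h1 ?h2 ?h3 ?h4.
- move=> a b u v _ [h1 h2]; split => x.
    by rewrite !zs_cat !act_cat h1.
  by rewrite !ids_cat !mem_cat h2.
Qed.

Lemma permpart_ext f g : f =1 g -> permpart f = permpart g.
Proof. by move=> h; apply/ffunP => p; rewrite !ffunE /PP !h. Qed.

Lemma boxpart_eq S T : S =i T -> boxpart S = boxpart T.
Proof. by move=> h; apply/ffunP => p; rewrite !ffunE; apply: linked_eq. Qed.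

Lemma sound_eval (u v : seq (gen n)) : brcong u v -> eval u = eval v.
Proof.
move=> /sound [h1 h2]; rewrite !evalE; congr pair.
  exact: permpart_ext. exact: boxpart_eq.
Qed.

Lemma perm_inj f fi g gi : bij f fi -> bij g gi -> permpart f = permpart g ->
  forall x, x < n -> f x = g x.
Proof.
move=> hf hg e x hx; have [f1 f2 f3 f4] := hf x hx.
have h1 : x < n + n by lia.
have h2 : n + f x < n + n by lia.
have := congr1 (fun P : spart n => P (Ordinal h1, Ordinal h2)) e.
rewrite !ffunE /PP /= hx (_ : n + f x < n = false); last lia.
by rewrite addKn eqxx => /esym/eqP.
Qed.

Lemma box_inj S T : boxpart S = boxpart T -> forall k, k.+1 < n -> (k \in S) = (k \in T).
Proof.
move=> e k hk.
have h1 : k < n + n by lia.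
have h2 : k.+1 < n + n by lia.
have := congr1 (fun P : spart n => P (Ordinal h1, Ordinal h2)) e.
by rewrite !ffunE /= !modn_small ?linked1 //; lia.
Qed.

Lemma tog_val (s : seq 'I_n.-1) : tog n (map val s) = map (@gz n) s.
Proof. by rewrite /tog; congr map; elim: s => //= i s ->; rewrite valK. Qed.

Lemma complete (u v : seq (gen n)) : eval u = eval v -> brcong u v.
Proof.
rewrite !evalE => -[ep eb].
have hact : act (zs u) =1 act (zs v).
  move=> x; case: (ltnP x n) => hx.
    exact: (perm_inj (bij_act (zs_lt u)) (bij_act (zs_lt v)) ep hx).
  rewrite !act_fix //; apply: sub_all (zs_lt _) => k; lia.
have hids : ids u =i ids v.
  move=> k; case: (ltnP k.+1 n) => hk; first exact: box_inj eb k hk.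
  have F : forall w, k \in ids w = false.
    move=> w; apply/negbTE/negP => hin; have := allP (ids_lt w) k hin; lia.
  by rewrite !F.
have heI : eI u =i eI v.
  by move=> i; rewrite -(mem_map val_inj) -[RHS](mem_map val_inj); exact: hids.
apply: c_trans (normalize u) _.
apply: c_trans (bc_r _ (esame heI)) _.
apply: c_trans _ (c_sym (normalize v)).
rewrite -!tog_val.
apply: (zeq_bc (A := fun k => k \in ids v)).
- apply: (core (m := n.-1)).
  + apply/allP => k hk; apply/andP; split; first by rewrite -hids; exact: zs_ids.
    by rewrite ltn_predRL; apply: (allP (zs_lt u)).
  + apply/allP => k hk; apply/andP; split; first exact: zs_ids.
    by rewrite ltn_predRL; apply: (allP (zs_lt v)).
  + exact: hact.
- by move=> k hk; rewrite ltn_predRL; apply: (allP (ids_lt v)).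
- by move=> k hk.
Qed.

Lemma sp_nat (P : spart n) : is_setpart P ->
  [/\ (forall c, c < n + n -> rel_nat P c c),
      (forall c d, rel_nat P c d -> rel_nat P d c) &
      (forall c d e, rel_nat P c d -> rel_nat P d e -> rel_nat P c e)].
Proof.
case/and3P => /forallP h1 /forallP h2 /forallP h3; split.
- by move=> c hc; rewrite rel_natE.
- move=> c d h; have /andP [hc hd] := rel_nat_bnd h.
  move: h; rewrite !rel_natE.
  by move: (h2 (Ordinal hc)) => /forallP /(_ (Ordinal hd)) /implyP.
- move=> c d e h h'; have /andP [hc hd] := rel_nat_bnd h; have /andP [_ he] := rel_nat_bnd h'.
  move: h h'; rewrite !rel_natE => h h'.
  move: (h3 (Ordinal hc)) => /forallP /(_ (Ordinal hd)) /forallP /(_ (Ordinal he)).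
  by rewrite h h'.
Qed.

Lemma prec_nat (P Q : spart n) : preceq P Q -> forall c d, rel_nat P c d -> rel_nat Q c d.
Proof.
move=> /forallP h c d hcd; have /andP [hc hd] := rel_nat_bnd hcd.
move: hcd; rewrite !rel_natE; exact: (implyP (h (_, _))).
Qed.

Definition Sof (J : spart n) := [seq k <- iota 0 n.-1 | rel_nat J k k.+1].

Lemma J_box (J : spart n) : is_setpart J -> boxed J -> J = boxpart (Sof J).
Proof.
move=> hsp /andP [hpone /forallP hint].
have [r s t] := sp_nat hsp.
have hmod : forall c d, c < n + n -> d < n + n -> c %% n = d %% n -> rel_nat J c d.
  move=> c d hc hd e; apply: (prec_nat hpone); rewrite rel_natE ffunE /=; exact/eqP.
have hI : forall c e d, c < e -> e < d -> d < n -> rel_nat J c d -> rel_nat J c e.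
  move=> c e d h1 h2 h3.
  have hc : c < n + n by lia.
  have hd : d < n + n by lia.
  have he : e < n + n by lia.
  rewrite !rel_natE => hh.
  move: (hint (Ordinal hc)) => /forallP /(_ (Ordinal hd)) /forallP /(_ (Ordinal he)).
  by rewrite /= h1 h2 h3 hh => /implyP; apply.
have hS : forall k, (k \in Sof J) = (k.+1 < n) && rel_nat J k k.+1.
  move=> k; rewrite mem_filter mem_iota; apply/andP/andP => -[h1 h2]; split => //; lia.
have key : forall u v, u <= v -> v < n -> rel_nat J u v = linked (Sof J) u v.
  move=> u v huv hv; apply/idP/linkedP.
    move=> hj k hk; rewrite hS; apply/andP; split; first lia.
    have h1 : rel_nat J u k.
      case: (u =P k) => [<-|hne]; first by apply: r; lia.
      by apply: (hI u k v) => //; lia.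
    have h2 : rel_nat J u k.+1.
      case: (k.+1 =P v) => [->//|hne].
      by apply: (hI u k.+1 v) => //; lia.
    exact: t (s _ _ h1) h2.
  move=> hl; suff : forall w, u <= w <= v -> rel_nat J u w by apply; lia.
  elim => [|w IH] hw; first by have -> : u = 0 by [lia]; apply: r; lia.
  case: (u =P w.+1) => [<-|hne]; first by apply: r; lia.
  apply: t (IH _) _; first lia.
  have := hl w; rewrite hS => /(_ ltac:(lia)) /andP [_ //].
have key2 : forall u v, u < n -> v < n -> rel_nat J u v = linked (Sof J) u v.
  move=> u v hu hv; case: (leqP u v) => h; first exact: key.
  rewrite linked_sym -key; try lia.
  by apply/idP/idP => /s.
apply/ffunP => -[a b]; rewrite ffunE /= -rel_nat_ord.
have hn : 0 < n by have := ltn_ord a; lia.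
have ha := ltn_ord a; have hb := ltn_ord b.
have pa := ltn_pmod a hn; have pb := ltn_pmod b hn.
rewrite -key2 //.
have ea : rel_nat J a (a %% n) by apply: hmod; rewrite ?modn_mod //; lia.
have eb : rel_nat J b (b %% n) by apply: hmod; rewrite ?modn_mod //; lia.
apply/idP/idP => h.
  exact: t _ _ _ (s _ _ ea) (t _ _ _ h eb).
exact: t _ _ _ ea (t _ _ _ h (s _ _ eb)).
Qed.

Definition pk (P : spart n) (x : nat) (top : bool) : nat :=
  if [pick y : 'I_(n + n) | rel_nat P x y && ((y < n) == top)] is Some y then val y else 0.

Lemma pk_spec P x top : is_setpart P -> is_permpart P -> x < n + n ->
  [/\ rel_nat P x (pk P x top), (pk P x top < n) = top &
      forall y, rel_nat P x y -> (y < n) = top -> y = pk P x top].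
Proof.
move=> hsp /forallP hpp hx.
have [y0 hy0] : exists y0 : 'I_(n + n), forall y : 'I_(n + n),
    (rel_nat P x y && ((y < n) == top)) = (y == y0).
  have /andP [h1 h2] := hpp (Ordinal hx).
  case: top.
    move/cards1P: h1 => [y0 e]; exists y0 => y.
    have := congr1 (fun A : {set 'I_(n + n)} => y \in A) e.
    by rewrite !inE /= eqb_id -(rel_nat_ord P (Ordinal hx) y).
  move/cards1P: h2 => [y0 e]; exists y0 => y.
  have := congr1 (fun A : {set 'I_(n + n)} => y \in A) e.
  by rewrite !inE /= eqbF_neg -leqNgt -(rel_nat_ord P (Ordinal hx) y).
have epk : pk P x top = val y0.
  rewrite /pk; case: pickP => [y hy | hnone].
    by move: hy; rewrite hy0 => /eqP ->.
  by move: (hnone y0); rewrite hy0 eqxx.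
have := hy0 y0; rewrite eqxx => /andP [h1 /eqP h2].
rewrite epk; split => //.
move=> y hy hyt; have /andP [_ hyb] := rel_nat_bnd hy.
have := hy0 (Ordinal hyb); rewrite /= hy hyt eqxx /= => /esym /eqP <- //.
Qed.

Lemma P_perm (P : spart n) : is_setpart P -> is_permpart P ->
  exists f fi, [/\ bij f fi, P = permpart f & forall x, x < n -> rel_nat P x (n + f x)].
Proof.
move=> hsp hpp; have [r s t] := sp_nat hsp.
pose tp c := pk P c true; pose bt c := pk P c false.
exists (fun c => bt c - n), (fun c => tp (n + c)).
have T c : c < n + n -> [/\ rel_nat P c (tp c), tp c < n &
   forall y, rel_nat P c y -> y < n -> y = tp c].
  move=> hc; have [h1 h2 h3] := pk_spec true hsp hpp hc.
  split; [exact: h1 | by rewrite /tp h2 | by move=> y hy hyn; apply: h3].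
have B c : c < n + n -> [/\ rel_nat P c (bt c), n <= bt c, bt c < n + n &
   forall y, rel_nat P c y -> n <= y -> y = bt c].
  move=> hc; have [h1 h2 h3] := pk_spec false hsp hpp hc.
  have /andP [_ hb] := rel_nat_bnd h1.
  split; [exact: h1 | by rewrite leqNgt /bt h2 | exact: hb | ].
  by move=> y hy hyn; apply: h3 => //; apply/negbTE; rewrite -leqNgt.
have tpl : forall c, c < n -> tp c = c.
  move=> c hc; have [_ _ h] := T c ltac:(lia); apply/esym/h => //; apply: r; lia.
have hb : bij (fun c => bt c - n) (fun c => tp (n + c)).
  move=> x hx; have [b1 b2 b3 b4] := B x ltac:(lia).
  have [t1 t2 t3] := T (n + x) ltac:(lia).
  split; first lia; first done.
  - rewrite subnKC //.
    have [_ _ u3] := T (bt x) b3. by apply/esym/u3 => //; apply: s.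
  - have [_ _ _ c4] := B (tp (n + x)) ltac:(lia).
    by rewrite -(c4 (n + x)) ?addKn //; [apply: s | lia].
split => //.
- apply/ffunP => -[a b]; rewrite ffunE /= (PP_lab hb) // -rel_nat_ord.
  have Lt : forall c, c < n + n -> L (fun c => tp (n + c)) c = tp c.
    move=> c hc; case: (ltnP c n) => h; first by rewrite Llo // tpl.
    by rewrite Lhi // subnKC.
  have ha := ltn_ord a; have hb' := ltn_ord b.
  rewrite !Lt //.
  have [a1 a2 a3] := T a ha; have [b1 b2 b3] := T b hb'.
  apply/idP/eqP => h.
    apply: b3 => //; exact: t _ _ _ (s _ _ h) a1.
  by rewrite h in a1; exact: t _ _ _ a1 (s _ _ b1).
- move=> x hx; have [b1 b2 b3 b4] := B x ltac:(lia); by rewrite subnKC.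
Qed.

Lemma bubble S m : forall f fi, bij f fi -> (forall x, x < n -> m <= x -> f x = x) ->
  (forall x, x < n -> linked S x (f x)) ->
  exists u, all (fun i => i \in S) u /\ forall x, x < n -> act u x = f x.
Proof.
elim: m => [|m IH] f fi hb hfix hl.
  by exists [::]; split => // x hx; rewrite hfix.
case: (ltnP m n) => hmn; last first.
  apply: (IH f fi hb) => // x hx hm; apply: hfix => //; lia.
have [f1 f2 f3 f4] := hb m hmn.
set k := f m.
have hk : k <= m.
  rewrite leqNgt; apply/negP => hkm.
  have := hfix k f1 hkm; have [_ _ g3 _] := hb k f1 => e.
  have : fi (f k) = fi (f m) by rewrite e.
  by rewrite g3 f3; lia.
set c := cw m.-1 (m - k).
have hcS : all (fun i => (i \in S) && (i.+1 < n)) c.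
  apply: all_mapiota => j hj; apply/andP; split; last lia.
  move/linkedP: (hl m hmn); apply; rewrite -/k; lia.
have hcl : all (fun i => i.+1 < n) c by apply: sub_all hcS => i /andP [].
have hcS' : all (fun i => i \in S) c by apply: sub_all hcS => i /andP [].
have hcm : act c m = k.
  rewrite /c; case: (posnP m) => hm0.
    rewrite hm0 in hk *; have -> : k = 0 by lia. by [].
  have := @act_cw m.-1 (m - k) ltac:(lia). rewrite (ltn_predK hm0) => ->; lia.
pose g x := act (rev c) (f x).
have hbc : bij (act (rev c)) (act c).
  have := bij_act (_ : all (fun i => i.+1 < n) (rev c)); rewrite revK; apply.
  by rewrite all_rev.
have hbg : bij g (fun x => fi (act c x)) by apply: bij_comp.
have gfix : forall x, x < n -> m <= x -> g x = x.
  move=> x hx hmx; rewrite /g.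
  case: (m =P x) => [<-|hne].
    by rewrite -/k -hcm act_revK.
  rewrite hfix //; last lia.
  apply: act_fix; rewrite all_rev; apply: all_mapiota => j hj; lia.
have gl : forall x, x < n -> linked S x (g x).
  move=> x hx; rewrite /g; apply: linked_trans (hl x hx) _.
  apply: act_linked; by rewrite all_rev.
have [u [hu hact]] := IH g _ hbg gfix gl.
exists (u ++ c); split; first by rewrite all_cat hu hcS'.
move=> x hx; rewrite act_cat hact // /g act_Krev //.
Qed.

Lemma val_pmap_insub (u : seq nat) : all (fun k => k < n.-1) u ->
  map val (pmap insub u : seq 'I_n.-1) = u.
Proof.
elim: u => //= k u IH /andP [hk hu]; rewrite (insubT (fun k => k < n.-1) hk) /=.
by rewrite IH.
Qed.

Lemma zs_ge (s : seq 'I_n.-1) : zs (map (@ge n) s) = [::].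
Proof. by elim: s. Qed.
Lemma zs_gz (s : seq 'I_n.-1) : zs (map (@gz n) s) = map val s.
Proof. by elim: s => //= i s; rewrite /zs /= => ->. Qed.
Lemma ids_ge (s : seq 'I_n.-1) : ids (map (@ge n) s) = map val s.
Proof. by elim: s => //= i s; rewrite /ids /= => ->. Qed.
Lemma ids_gz (s : seq 'I_n.-1) : ids (map (@gz n) s) = map val s.
Proof. by elim: s => //= i s; rewrite /ids /= => ->. Qed.

Lemma permpart_ext_lt f g : (forall x, x < n -> f x = g x) -> permpart f = permpart g.
Proof.
move=> h; apply/ffunP => -[a b]; rewrite !ffunE /PP /=.
case: (ltnP a n) => ha; case: (ltnP b n) => hb //=; by rewrite h.
Qed.

Lemma surj (x : BR n) : in_BR x -> exists w, eval w = x.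
Proof.
case: x => P J /and5P [sP sJ pP bJ prec]; rewrite /= in sP sJ pP bJ prec.
have eJ := J_box sJ bJ; set S := Sof J in eJ.
have [f [fi [hb eP hrel]]] := P_perm sP pP.
have hl : forall x, x < n -> linked S x (f x).
  move=> x hx; have [f1 _ _ _] := hb x hx.
  have := prec_nat prec (hrel x hx); rewrite {1}eJ rel_nat_box => /and3P [_ _].
  by rewrite modnDl !modn_small.
have [u [hu hact]] := bubble (m := n) hb (fun x hx hnx => ltac:(lia)) hl.
have hSlt : forall k, k \in S -> k < n.-1.
  by move=> k; rewrite mem_filter mem_iota => /andP [_ /andP [_ h]].
exists (map (@ge n) (pmap insub S) ++ map (@gz n) (pmap insub u)).
rewrite evalE zs_cat ids_cat zs_ge zs_gz ids_ge ids_gz !val_pmap_insub; first last.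
- by apply/allP => k hk; apply: hSlt.
- by apply/allP => k hk; apply: hSlt; apply: (allP hu).
rewrite eP eJ /=; congr pair.
  by apply: permpart_ext_lt => x hx; rewrite hact.
apply: boxpart_eq => k; rewrite mem_cat.
by case: (boolP (k \in u)) => h; rewrite ?orbF // (allP hu k h).
Qed.
End Sem.

Unset Implicit Arguments.

Theorem theorem5p13 (n : nat) :
  (forall w : seq (gen n), in_BR (eval w)) /\
  (forall x : BR n, in_BR x -> exists w : seq (gen n), eval w = x) /\
  (forall u v : seq (gen n), eval u = eval v <-> brcong u v).
Proof.
split; first by move=> w; exact: part1.
split; first by move=> x hx; exact: surj.
move=> u v; split; [exact: complete | exact: sound_eval].
Qed.
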